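(* There exists an $AP_3$-covering sequence $A$ of nonnegative integers such that $$\limsup_{n\to\infty}\frac{A(n)}{\sqrt n}=\sqrt{15}.$$
   Context: A sequence (set) $A$ of nonnegative integers is called an $AP_k$-covering sequence if there exists an integer $n_0$ such that for every integer $n>n_0$ there exist $a_1,\dots,a_{k-1}\in A$ with $a_1<a_2<\cdots<a_{k-1}<n$ such that $a_1,\dots,a_{k-1},n$ form a $k$-term arithmetic progression. Here $k=3$. $A(n)$ denotes the counting function $A(n)=\#\{a\in A: a\le n\}$. *)

(* Defs.v *)
From HB Require Import structures.
From mathcomp Require Import all_boot all_order all_algebra.
From mathcomp Require Import all_classical all_reals all_analysis.
Set Implicit Arguments. Unset Strict Implicit. Unset Printing Implicit Defensive.
Import Order.TTheory GRing.Theory Num.Theory.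

Definition AP3_covering (A : pred nat) : Prop :=
  exists n0 : nat, forall n : nat, n0 < n ->
    exists a1 a2 : nat, [/\ A a1, A a2, a1 < a2, a2 < n & a2 - a1 = n - a2].

Definition countA (A : pred nat) (n : nat) : nat := count A (iota 0 n.+1).

(* Main.v *)
Require Import Defs.
From HB Require Import structures.
From mathcomp Require Import all_boot all_order all_algebra.
From mathcomp Require Import all_classical all_reals all_analysis.
From mathcomp Require Import zify lra.
Import Order.TTheory GRing.Theory Num.Theory.


Fixpoint phif (f i : nat) : nat :=
  if f is f'.+1 then (if i == 0 then 0 else 4 * phif f' i./2 + odd i) else 0.
Definition phi i := phif i i.

Lemma half_lt i : i != 0 -> i./2 < i.
Proof. move=> h; have := odd_double_half i; rewrite -muln2; case: (odd i) => /=; lia. Qed.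

Lemma phif_eq f g i : i <= f -> i <= g -> phif f i = phif g i.
Proof.
elim: f g i => [|f IH] [|g] i /=; try (by case: i).
case: eqP => // /eqP i0 hf hg; congr (4 * _ + _); apply: IH;
  have := @half_lt i i0; lia.
Qed.

Lemma phiE i : phi i = 4 * phi i./2 + odd i.
Proof.
case: i => [//|i]; rewrite /phi /=; congr (4 * _ + _).
apply: phif_eq => //; have := @half_lt i.+1 isT; lia.
Qed.

Lemma phi0 : phi 0 = 0. Proof. by []. Qed.


Fixpoint psif (f m : nat) : nat :=
  if f is f'.+1 then (if m < 6 then m - 2 else 4 * psif f' m./2 + odd m) else 0.
Definition Psi m := psif m m.

Lemma psif_eq f g m : m <= f -> m <= g -> psif f m = psif g m.
Proof.
elim: f g m => [|f IH] [|g] m /=; try (by case: m).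
case: ifP => // h hf hg.
have m0 : m != 0 by apply/eqP => m0; rewrite m0 in h.
have := @half_lt m m0 => hm.
congr (4 * _ + _); apply: IH; lia.
Qed.

Lemma PsiE m : Psi m = if m < 6 then m - 2 else 4 * Psi m./2 + odd m.
Proof.
case: m => [//|m]; rewrite /Psi /=; case: ifP => // _; congr (4 * _ + _).
apply: psif_eq => //; have := @half_lt m.+1 isT; lia.
Qed.

Lemma half2 i : (2 * i)./2 = i.
Proof. by rewrite mul2n doubleK. Qed.
Lemma half21 i : (2 * i + 1)./2 = i.
Proof. by rewrite addn1 mul2n /= uphalf_double. Qed.
Lemma odd2 i : odd (2 * i) = false.
Proof. by rewrite mul2n odd_double. Qed.
Lemma odd21 i : odd (2 * i + 1) = true.
Proof. by rewrite addn1 mul2n /= odd_double. Qed.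

Lemma phi2 i : phi (2 * i) = 4 * phi i.
Proof. by rewrite phiE half2 odd2 addn0. Qed.
Lemma phi21 i : phi (2 * i + 1) = 4 * phi i + 1.
Proof. by rewrite phiE half21 odd21. Qed.

Lemma Psi2 h : 3 <= h -> Psi (2 * h) = 4 * Psi h.
Proof. by move=> h3; rewrite PsiE ifF ?half2 ?odd2 ?addn0 //; lia. Qed.
Lemma Psi21 h : 3 <= h -> Psi (2 * h + 1) = 4 * Psi h + 1.
Proof. by move=> h3; rewrite PsiE ifF ?half21 ?odd21 //; lia. Qed.

Lemma halfE m : m = 2 * m./2 + odd m.
Proof. have := odd_double_half m; rewrite -muln2; lia. Qed.

Lemma odd_le1 m : (odd m : nat) <= 1.
Proof. by case: (odd m). Qed.

Lemma nat_split m : exists h b, m = 2 * h + b /\ b <= 1.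
Proof. exists m./2, (odd m); split; [exact: halfE | exact: odd_le1]. Qed.

Lemma Psi_lb m : 3 <= m -> (m + 1) ^ 2 <= 12 * Psi m + 4.
Proof.
elim/ltn_ind: m => m IH m3.
case: (ltnP m 6) => m6.
  by case: m m3 m6 {IH} => [|[|[|[|[|[|m]]]]]].
have [h [b [mE b1]]] := nat_split m; subst m.
have h3 : 3 <= h by lia.
have := IH h ltac:(lia) h3.
have [->|->] : b = 0 \/ b = 1 by lia.
  rewrite addn0 Psi2 //; nia.
rewrite Psi21 //; nia.
Qed.

Lemma Psi_S m : 2 <= m -> Psi m < Psi m.+1.
Proof.
elim/ltn_ind: m => m IH m2.
case: (ltnP m 6) => m6.
  by case: m m2 m6 {IH} => [|[|[|[|[|[|m]]]]]].
have [h [b [mE b1]]] := nat_split m; subst m.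
have h3 : 3 <= h by lia.
have [->|->] : b = 0 \/ b = 1 by lia.
  by rewrite addn0 (_ : (2 * h).+1 = 2 * h + 1) ?Psi2 ?Psi21 //; lia.
have -> : (2 * h + 1).+1 = 2 * h.+1 by lia.
rewrite Psi2 ?Psi21; try lia.
have := IH h ltac:(lia) ltac:(lia); lia.
Qed.

Lemma Psi_lt a b : 2 <= a -> a < b -> Psi a < Psi b.
Proof.
move=> a2; elim: b => [//|b IH]; rewrite ltnS leq_eqVlt => /orP [/eqP <-|ab].
  exact: Psi_S.
have := IH ab; have := @Psi_S b ltac:(lia); lia.
Qed.

Fixpoint T k := if k is k'.+1 then 4 * T k' + 1 else 0.

Lemma T3 k : 3 * T k + 1 = 4 ^ k.
Proof. elim: k => [//|k IH] /=; rewrite expnS; lia. Qed.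

Lemma TB k b : 2 ^ k.+2 - 2 <= b -> 12 * T k.+1 <= (b + 2) * (b + 2).
Proof.
move=> h.
have E : 12 * T k.+1 + 4 = 2 ^ k.+2 * 2 ^ k.+2.
  rewrite -expnMn (expnS (2 * 2) k.+1) -(T3 k.+1).
  rewrite [2 * 2]/=; lia.
have h2 : 2 ^ k.+2 <= b + 2 by lia.
have := leq_mul h2 h2; lia.
Qed.

Lemma J_le n : n <= 4 * (n.+1 %/ 4 - 1) + 6.
Proof. lia. Qed.

Lemma T_ge k : k <= T k.
Proof. elim: k => [//|k IH] /=; lia. Qed.

Lemma Psi_T k : Psi (2 ^ k.+2 - 1) = T k.+1.
Proof.
elim: k => [//|k IH].
have -> : 2 ^ k.+3 - 1 = 2 * (2 ^ k.+2 - 1) + 1.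
  rewrite (expnS 2 k.+2); have := expn_gt0 2 k.+2; lia.
rewrite Psi21 ?IH //; rewrite !expnS; have := expn_gt0 2 k; lia.
Qed.

Lemma Psi_D k a : a < 2 ^ k.+1 -> Psi (2 ^ k.+2 + a) = 2 * 4 ^ k + phi a.
Proof.
elim: k a => [|k IH] a ha.
  by case: a ha => [|[|]].
have [h [b [mE b1]]] := nat_split a; subst a.
have hh : h < 2 ^ k.+1 by rewrite expnS in ha; lia.
have -> : 2 ^ k.+3 + (2 * h + b) = 2 * (2 ^ k.+2 + h) + b by rewrite (expnS 2 k.+2); lia.
have h3 : 3 <= 2 ^ k.+2 + h by rewrite !expnS; have := expn_gt0 2 k; lia.
have [->|->] : b = 0 \/ b = 1 by lia.
  by rewrite !addn0 Psi2 // phi2 IH // expnS; lia.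
by rewrite Psi21 // phi21 IH // expnS; lia.
Qed.

Lemma Psi_3 k a : a < 2 ^ k -> Psi (3 * 2 ^ k + a) = 4 ^ k + phi a.
Proof.
elim: k a => [|k IH] a ha.
  by case: a ha => [|].
have [h [b [mE b1]]] := nat_split a; subst a.
have hh : h < 2 ^ k by rewrite expnS in ha; lia.
have -> : 3 * 2 ^ k.+1 + (2 * h + b) = 2 * (3 * 2 ^ k + h) + b by rewrite (expnS 2 k); lia.
have h3 : 3 <= 3 * 2 ^ k + h by have := expn_gt0 2 k; lia.
have [->|->] : b = 0 \/ b = 1 by lia.
  by rewrite !addn0 Psi2 // phi2 IH // expnS; lia.
by rewrite Psi21 // phi21 IH // expnS; lia.
Qed.

Lemma phi_split k w : w < 4 ^ k -> exists a b, [/\ a < 2 ^ k, b < 2 ^ k & w = 2 * phi a + phi b].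
Proof.
elim: k w => [|k IH] w hw.
  by exists 0, 0; case: w hw.
have hw' : w %/ 4 < 4 ^ k by rewrite expnS in hw; lia.
have [a [b [ha hb E]]] := IH _ hw'.
have hd : w = 4 * (w %/ 4) + w %% 4 by lia.
have d4 : w %% 4 < 4 by lia.
exists (2 * a + (w %% 4) %/ 2), (2 * b + (w %% 4) %% 2); split.
- rewrite expnS; lia.
- rewrite expnS; lia.
case: (w %% 4) hd d4 => [|[|[|[|//]]]] hd _ /=.
- by rewrite !addn0 !phi2; lia.
- by rewrite addn0 phi2 phi21; lia.
- by rewrite addn0 phi2 phi21; lia.
- by rewrite !phi21; lia.
Qed.

Lemma phi_compl k b : b < 2 ^ k -> phi b + phi (2 ^ k - 1 - b) = T k.
Proof.
elim: k b => [|k IH] b hb.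
  by case: b hb.
have [h [e [mE e1]]] := nat_split b; subst b.
have hh : h < 2 ^ k by rewrite expnS in hb; lia.
have := IH _ hh.
move=> E; have [->|->] : e = 0 \/ e = 1 by lia.
  have -> : 2 ^ k.+1 - 1 - (2 * h + 0) = 2 * (2 ^ k - 1 - h) + 1 by rewrite expnS; lia.
  rewrite addn0 phi2 phi21 /=; lia.
have -> : 2 ^ k.+1 - 1 - (2 * h + 1) = 2 * (2 ^ k - 1 - h) by rewrite expnS; lia.
rewrite phi2 phi21 /=; lia.
Qed.

Lemma phi_Psi i : 0 < i -> exists2 m, 3 <= m & Psi m = phi i.
Proof.
elim/ltn_ind: i => i IH i0.
case: (ltnP i 2) => i2.
  by exists 3 => //; have -> : i = 1 by lia.
have [h [b [mE b1]]] := nat_split i; subst i.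
have [m m3 E] := IH h ltac:(lia) ltac:(lia).
have [->|->] : b = 0 \/ b = 1 by lia.
  by exists (2 * m); [lia | rewrite Psi2 // addn0 phi2 E].
by exists (2 * m + 1); [lia | rewrite Psi21 // phi21 E].
Qed.

Definition Bp (x : nat) : bool :=
  has (fun m => (2 <= m) && (Psi m == x)) (iota 0 (12 * x + 5)).

Lemma BP x : reflect (exists2 m, 2 <= m & Psi m = x) (Bp x).
Proof.
apply: (iffP hasP) => [[m _ /andP [m2 /eqP E]]|[m m2 E]].
  by exists m.
exists m; last by rewrite m2 E eqxx.
rewrite mem_iota /=; case: (ltnP m 3) => m3; first lia.
have := @Psi_lb m m3; rewrite E; nia.
Qed.

Lemma phi_B i : Bp (phi i).
Proof.
case: i => [|i]; first by apply/BP; exists 2.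
have [m m3 E] := @phi_Psi i.+1 isT; apply/BP; exists m => //; lia.
Qed.

Lemma cover_range k n : 2 * T k.+1 + 1 <= n < 8 * T k.+1 + 3 ->
  exists a1 a2, [/\ Bp a1, Bp a2, a1 < a2, a2 < n & a2 - a1 = n - a2].
Proof.
move=> /andP [n1 n2].
have HT := T3 k.+1; rewrite expnS in HT.
have HT' : T k.+1 = 4 * T k + 1 by [].
set P := 4 ^ k in HT; set Q := T k.+1 in HT HT' n1 n2 *.
case: (leqP n (4 * P + 2 * Q)) => hm.
- have hw : n + Q - 4 * P < 4 ^ k.+1 by rewrite expnS -/P; lia.
  have [a [b [ha hb E]]] := @phi_split _ _ hw.
  have Ca := @phi_compl _ _ hb.
  exists (phi (2 ^ k.+1 - 1 - b)), (Psi (2 ^ k.+2 + a)).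
  rewrite Psi_D //; split.
  + exact: phi_B.
  + by apply/BP; exists (2 ^ k.+2 + a); [rewrite expnS; have := expn_gt0 2 k.+1; lia | rewrite Psi_D].
  + rewrite -/P -/Q; lia.
  + rewrite -/P -/Q; lia.
  + rewrite -/P -/Q; lia.
- have hw : n + Q - 8 * P < 4 ^ k.+1 by rewrite expnS -/P; lia.
  have [a [b [ha hb E]]] := @phi_split _ _ hw.
  have Ca := @phi_compl _ _ hb.
  exists (phi (2 ^ k.+1 - 1 - b)), (Psi (3 * 2 ^ k.+1 + a)).
  rewrite Psi_3 // (expnS 4 k) -/P; split.
  + exact: phi_B.
  + by apply/BP; exists (3 * 2 ^ k.+1 + a); [have := expn_gt0 2 k.+1; lia | rewrite Psi_3 // expnS].
  + rewrite -/Q; lia.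
  + rewrite -/Q; lia.
  + rewrite -/Q; lia.
Qed.

Lemma cover n : 3 <= n ->
  exists a1 a2, [/\ Bp a1, Bp a2, a1 < a2, a2 < n & a2 - a1 = n - a2].
Proof.
move=> n3.
suff H : forall k, n < 2 * T k.+2 + 1 -> exists a1 a2, [/\ Bp a1, Bp a2, a1 < a2, a2 < n & a2 - a1 = n - a2].
  apply: (H n); have := T_ge n.+2; lia.
elim=> [|k IH] hn.
  by apply: (@cover_range 0); rewrite /= in hn *; lia.
case: (ltnP n (2 * T k.+2 + 1)) => h; first exact: IH.
apply: (@cover_range k.+1); rewrite /= in hn h *; lia.
Qed.

Definition idx x := find (fun m => (2 <= m) && (Psi m == x)) (iota 0 (12 * x + 5)).

Lemma idxP x : Bp x -> 2 <= idx x /\ Psi (idx x) = x.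
Proof.
move=> hx; have := hx; rewrite /Bp has_find size_iota => hf.
have := nth_find 0 hx; rewrite nth_iota // add0n -/(idx x).
by move=> /andP [-> /eqP ->].
Qed.

Lemma cntB_ub n : 1 <= n -> (count Bp (iota 0 n.+1)) ^ 2 <= 12 * n.
Proof.
move=> n1; rewrite -size_filter.
set s := seq.filter Bp (iota 0 n.+1); set c := size s.
case: (leqP c 1) => c1; first by nia.
case: (leqP ((c + 2) ^ 2) (12 * n + 4)) => hc; first by nia.
exfalso.
have us : uniq (map idx s).
  rewrite map_inj_in_uniq ?filter_uniq ?iota_uniq //.
  move=> x y; rewrite !mem_filter => /andP [bx _] /andP [yb _] e.
  by rewrite -(@idxP _ bx).2 -(@idxP _ yb).2 e.
have sub : {subset map idx s <= iota 2 (c - 1)}.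
  move=> m /mapP [x]; rewrite mem_filter mem_iota => /andP [bx /andP [_ xn]] ->.
  have [i2 iE] := @idxP _ bx; rewrite mem_iota.
  case: (ltnP (idx x) 3) => i3; first lia.
  have := @Psi_lb (idx x) i3; rewrite iE; nia.
have := uniq_leq_size us sub; rewrite size_map size_iota -/c; lia.
Qed.

Lemma Psi_inj a b : 2 <= a -> 2 <= b -> Psi a = Psi b -> a = b.
Proof.
move=> a2 b2 e; case: (ltngtP a b) => // h.
  by have := @Psi_lt a b a2 h; rewrite e ltnn.
by have := @Psi_lt b a b2 h; rewrite e ltnn.
Qed.

Lemma cntB_lb k : 2 ^ k.+2 - 2 <= count Bp (iota 0 (T k.+1).+1).
Proof.
rewrite -size_filter.
have -> : 2 ^ k.+2 - 2 = size (map Psi (iota 2 (2 ^ k.+2 - 2))) by rewrite size_map size_iota.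
apply: uniq_leq_size.
  rewrite map_inj_in_uniq ?iota_uniq //.
  move=> a b; rewrite !mem_iota => /andP [a2 _] /andP [b2 _]; exact: Psi_inj.
move=> y /mapP [m]; rewrite mem_iota => /andP [m2 mk] ->.
rewrite mem_filter mem_iota; apply/andP; split.
  by apply/BP; exists m.
rewrite add0n ltnS -Psi_T leq0n /=.
have h2 : 2 <= 2 ^ k.+2 by rewrite !expnS; have := expn_gt0 2 k; lia.
case: (ltnP m (2 ^ k.+2 - 1)) => h.
  by apply: ltnW; apply: Psi_lt.
by have -> : m = 2 ^ k.+2 - 1 by lia.
Qed.

Lemma Psi_mod3 m : Psi m %% 4 = 3 -> Psi m = 3.
Proof.
rewrite PsiE; case: ifP => h; first lia.
have := odd_le1 m; lia.
Qed.

Definition Cp (g : nat -> nat) (x : nat) : bool :=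
  (x %% 4 == 3) && (g (x %/ 4 - 1) < g (x %/ 4)).

Lemma BC_disj g x : Bp x -> Cp g x -> False.
Proof.
move=> /BP [m _ E] /andP [/eqP h]; rewrite -E in h *.
by rewrite (@Psi_mod3 m h) /= ltnn.
Qed.

Lemma cntC g n : g 0 = 0 -> (forall j, g j <= g j.+1 <= (g j).+1) ->
  count (Cp g) (iota 0 n.+1) = g (n.+1 %/ 4 - 1).
Proof.
move=> g0 gS; elim: n => [|n IH].
  by rewrite /= /Cp /= (_ : 1 %/ 4 - 1 = 0) ?g0.
rewrite -[n.+2]addn1 iotaD count_cat IH /= addn0 add0n /Cp.
case: (eqVneq (n.+1 %% 4) 3) => h /=.
  have -> : (n.+1 + 1) %/ 4 - 1 = n.+1 %/ 4 by lia.
  case: (n.+1 %/ 4) => [|q]; first by rewrite sub0n ltnn addn0.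
  rewrite subSS subn0; have := gS q; case: ltnP => /=; lia.
rewrite addn0; congr g; lia.
Qed.

Lemma count_disj (a b : pred nat) s : (forall x, a x -> b x -> False) ->
  count (fun x => a x || b x) s = count a s + count b s.
Proof.
move=> d; elim: s => [//|x s IH] /=; rewrite IH.
case: (boolP (a x)) => ax; case: (boolP (b x)) => bx /=; try lia.
exfalso; exact: d ax bx.
Qed.

Local Open Scope ring_scope.

Lemma limsup_char (R : realType) (u : nat -> R) (l : R) :
  (forall n, u n <= l) ->
  (forall e : R, 0 < e -> forall N : nat, exists n : nat, (N <= n)%N /\ l - e <= u n) ->
  limn_esup (fun n => (u n)%:E) = l%:E.
Proof.
move=> ub lb.
have E : esups (fun n => (u n)%:E) = fun _ => l%:E.
  apply/funext => N /=; apply/eqP; rewrite eq_le; apply/andP; split.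
    by apply/ereal_supP => _ [m _ <-]; rewrite lee_fin.
  apply/lee_addgt0Pr => e e0.
  have [n [Nn hn]] := lb e e0 N.
  rewrite -leeBlDr//.
  apply: le_ereal_sup_tmp; exists (u n)%:E; first by exists n.
  by rewrite -EFinB lee_fin.
rewrite limn_esup_lim E; exact: lim_cst.
Qed.

Lemma sq_le (R : realType) (x y : R) : 0 <= x -> 0 <= y -> x ^+ 2 <= y ^+ 2 -> x <= y.
Proof. move=> hx hy h; nra. Qed.

Lemma sq_lt (R : realType) (x y : R) : 0 <= y -> x ^+ 2 < y ^+ 2 -> x < y.
Proof. move=> hy h; nra. Qed.

Lemma final_ineq (R : realType) (s12 c e r sJ b gJ : R) : 0 <= c -> 2 * c <= 1 ->
  s12 * r <= b + 2 -> 2 * c * sJ < gJ + 1 -> r <= 2 * sJ + 3%:R -> 5%:R < e * r ->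
  (s12 + c - e) * r <= b + gJ.
Proof.
move=> c0 c2 h1 h2 h3 h4.
have : c * r <= c * (2 * sJ + 3%:R) by apply: ler_wpM2l.
move=> h5; nra.
Qed.

Lemma rJ_ineq (R : realType) (r sJ n J : R) : 0 <= r -> 0 <= sJ -> r ^+ 2 = n -> sJ ^+ 2 = J ->
  n <= 4%:R * J + 6%:R -> r <= 2 * sJ + 3%:R.
Proof. move=> pr pJ hr hJ h; apply: sq_le => //; first nra. rewrite hr; nra. Qed.

Theorem theorem1 (R : realType) :
  exists A : pred nat, AP3_covering A /\
    limn_esup (fun n : nat => (((countA A n)%:R / Num.sqrt (n%:R)) : R)%:E)
      = (Num.sqrt (15%:R : R))%:E.
Proof.
pose s12 : R := Num.sqrt 12%:R.
pose s15 : R := Num.sqrt 15%:R.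
pose c : R := s15 - s12.
have h12 : s12 ^+ 2 = 12%:R by rewrite sqr_sqrtr // ler0n.
have h15 : s15 ^+ 2 = 15%:R by rewrite sqr_sqrtr // ler0n.
have p12 : 0 <= s12 by exact: sqrtr_ge0.
have p15 : 0 <= s15 by exact: sqrtr_ge0.
have g12 : 3 <= s12 by nra.
have c0 : 0 <= c by rewrite /c; nra.
have c2 : 2 * c <= 1 by rewrite /c; nra.
pose g := fun j : nat => Num.truncn (2 * c * Num.sqrt (j%:R : R)).
have g0 : g 0%N = 0%N by rewrite /g sqrtr0 mulr0 truncn0.
have gS : forall j, (g j <= g j.+1 <= (g j).+1)%N.
  move=> j; rewrite /g.
  set x := Num.sqrt (j%:R : R); set y := Num.sqrt (j.+1%:R : R).
  have hx : x ^+ 2 = j%:R by rewrite sqr_sqrtr // ler0n.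
  have hy : y ^+ 2 = j.+1%:R by rewrite sqr_sqrtr // ler0n.
  have px : 0 <= x by exact: sqrtr_ge0.
  have py : 0 <= y by exact: sqrtr_ge0.
  rewrite -natr1 in hy.
  have xy : x <= y by nra.
  have yx : y <= x + 1 by nra.
  apply/andP; split.
    by apply: le_truncn; nra.
  rewrite truncn_le_nat.
  have := truncnS_gt (2 * c * x).
  rewrite -!natr1; nra.
pose A := fun x => Bp x || Cp g x.
have cntA : forall n, countA A n = (count Bp (iota 0 n.+1) + g (n.+1 %/ 4 - 1))%N.
  move=> n; rewrite /countA /A count_disj; last exact: BC_disj.
  by rewrite cntC.
exists A; split.
  exists 2%N => n hn.
  have [a1 [a2 [b1 b2 h1 h2 h3]]] := @cover n hn.
  by exists a1, a2; split => //; rewrite /A ?b1 ?b2.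
apply: limsup_char.
- move=> n; case: n => [|n].
    by rewrite sqrtr0 invr0 mulr0.
  set m := n.+1.
  rewrite cntA natrD.
  set Bn := count Bp _; set J := (m.+1 %/ 4 - 1)%N.
  set r := Num.sqrt (m%:R : R).
  have hr : r ^+ 2 = m%:R by rewrite sqr_sqrtr // ler0n.
  have pr : 0 <= r by exact: sqrtr_ge0.
  have m1 : (1 <= m%:R :> R) by rewrite ler1n.
  have r0 : 0 < r by nra.
  have hB : (Bn%:R ^+ 2 <= 12%:R * m%:R :> R).
    by rewrite -natrX -natrM ler_nat; apply: cntB_ub.
  set sJ := Num.sqrt (J%:R : R).
  have hJ : sJ ^+ 2 = J%:R by rewrite sqr_sqrtr // ler0n.
  have pJ : 0 <= sJ by exact: sqrtr_ge0.
  have hJm : (4 * J <= m)%N by rewrite /J /m; lia.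
  have hJm' : 4%:R * J%:R <= m%:R :> R by rewrite -natrM ler_nat.
  have hC : (g J)%:R <= 2 * c * sJ.
    by rewrite /g truncn_le ?mulr_ge0.
  have hsJ : 2 * sJ <= r by nra.
  have hBr : Bn%:R <= s12 * r.
    by apply: sq_le; rewrite ?mulr_ge0 ?ler0n // exprMn h12 hr.
  rewrite ler_pdivrMr //.
  have e15 : Num.sqrt (15%:R : R) = s12 + c by rewrite /c /s15; lra.
  rewrite e15; nra.
- move=> e e0 N.
  pose k := (N + Num.truncn (25%:R / e ^+ 2))%N.
  pose n := T k.+1.
  have nk : (k.+1 <= n)%N by exact: T_ge.
  have nbig : (Num.truncn (25%:R / e ^+ 2) < n)%N.
    by apply: leq_trans nk; rewrite ltnS /k leq_addl.
  have nN : (N <= n)%N by apply: leq_trans nk; apply: leq_trans (leqnSn _); exact: leq_addr.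
  have nE : n = T k.+1 by [].
  clearbody n; clearbody k.
  exists n; split => //.
  rewrite cntA natrD.
  set Bn := count Bp _; set J := (n.+1 %/ 4 - 1)%N.
  set r := Num.sqrt (n%:R : R).
  have hr : r ^+ 2 = n%:R by rewrite sqr_sqrtr // ler0n.
  have pr : 0 <= r by exact: sqrtr_ge0.
  have hbig : 25%:R / e ^+ 2 < n%:R.
    by apply: lt_le_trans (truncnS_gt _) _; rewrite ler_nat.
  have e2 : 0 < e ^+ 2 by rewrite exprn_gt0.
  have hbig' : 25%:R < n%:R * e ^+ 2 by move: hbig; rewrite ltr_pdivrMr.
  have er : 5%:R < e * r.
    apply: sq_lt; first by rewrite mulr_ge0 // ltW.
    by rewrite exprMn hr mulrC -natrX; exact: hbig'.
  have r0 : 0 < r.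
    by rewrite lt_def pr andbT; apply/eqP => h; rewrite h mulr0 in er; lra.
  have hB1 : (2 ^ k.+2 - 2 <= Bn)%N by rewrite /Bn nE; exact: cntB_lb.
  have hM : (12 * n <= (Bn + 2) * (Bn + 2))%N by rewrite nE; exact: TB.
  have hBr : s12 * r <= Bn%:R + 2.
    apply: sq_le; rewrite ?mulr_ge0 ?addr_ge0 ?ler0n // exprMn h12 hr.
    by have := hM; rewrite -(ler_nat R) natrM natrM natrD expr2.
  set sJ := Num.sqrt (J%:R : R).
  have hJ : sJ ^+ 2 = J%:R by rewrite sqr_sqrtr // ler0n.
  have pJ : 0 <= sJ by exact: sqrtr_ge0.
  have hJn : (n <= 4 * J + 6)%N by exact: J_le.
  have hJn' : n%:R <= 4%:R * J%:R + 6%:R :> R by rewrite -natrM -natrD ler_nat.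
  have hC : 2 * c * sJ < (g J)%:R + 1.
    by rewrite natr1; exact: truncnS_gt.
  have hrJ : r <= 2 * sJ + 3%:R by exact: rJ_ineq hr hJ hJn'.
  rewrite ler_pdivlMr //.
  have e15 : Num.sqrt (15%:R : R) = s12 + c by rewrite /c /s15; lra.
  rewrite e15; exact: final_ineq hBr hC hrJ er.
Qed.
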